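(* If $\beta_\varphi>0$ and the limit $\zeta_\varphi=\lim_{r\to\infty}\frac{\log\varphi(r)}{\log\varphi(r^2)}$ exists, then $\alpha_{\varphi,s}=1$.
   Context: Let $R_0>0$. $\varphi:(R_0,\infty)\to(0,\infty)$ is a non-decreasing unbounded function with $\log r\le\varphi(r)\le r$ for $r\ge R_0$; $s:(R_0,\infty)\to(0,\infty)$ is non-decreasing with $r<s(r)\le r^2$ for $r\ge R_0$ and $\liminf_{r\to\infty}s(r)/r>1$. $\alpha_{\varphi,s}=\liminf_{r\to\infty}\frac{\log\varphi(r)}{\log\varphi(s(r))}$, $\beta_\varphi=\limsup_{r\to\infty}\frac{\log\log r}{\log\varphi(r)}$. *)

(* Defs.v *)
From HB Require Import structures.
From mathcomp Require Import all_boot all_order all_algebra.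
From mathcomp Require Import all_classical all_reals all_analysis.
Set Implicit Arguments. Unset Strict Implicit. Unset Printing Implicit Defensive.
Import Order.TTheory GRing.Theory Num.Theory.
Import numFieldNormedType.Exports.
Local Open Scope ring_scope.

Definition beta_phi (R : realType) (phi : R -> R) : \bar R :=
  limf_esup (fun r : R => (ln (ln r) / ln (phi r))%:E) +oo%R.

Definition alpha_phi_s (R : realType) (phi s : R -> R) : \bar R :=
  limf_einf (fun r : R => (ln (phi r) / ln (phi (s r)))%:E) +oo%R.

(* Main.v *)
Require Import Defs.
From HB Require Import structures.
From mathcomp Require Import all_boot all_order all_algebra.
From mathcomp Require Import all_classical all_reals all_analysis.
From mathcomp Require Import lra.
Import Order.TTheory GRing.Theory Num.Theory.
Import numFieldNormedType.Exports.
Local Open Scope classical_set_scope.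
Local Open Scope ring_scope.


Lemma key (R : realType) (L : R -> R) (B e : R) : 2 <= B -> 0 < e ->
  (forall x y, B <= x -> x <= y -> L x <= L y) ->
  (forall q, B <= q -> ln 2 + e * L q <= e * L (q ^+ 2)) ->
  forall r, B <= r -> ln (ln r) - e * L r <= ln (ln (B ^+ 2)) - e * L B.
Proof.
move=> B2 e0 Lmono Lstep.
have B1 : 1 < B by lra.
have base : forall r, B <= r -> r <= B^+2 ->
    ln (ln r) - e * L r <= ln (ln (B ^+ 2)) - e * L B.
  move=> r Br rB.
  have lnr : 0 < ln r by apply: ln_gt0; lra.
  have lnB2 : 0 < ln (B^+2) by apply: ln_gt0; lra.
  have h1 : ln (ln r) <= ln (ln (B^+2)).
    rewrite ler_ln ?posrE // ler_ln ?posrE //; lra.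
  have h2 : L B <= L r := Lmono _ _ (lexx B) Br.
  have h3 : e * L B <= e * L r by rewrite ler_pM2l.
  lra.
have ind : forall m : nat, forall r, B <= r -> r <= B^+2 + m%:R ->
    ln (ln r) - e * L r <= ln (ln (B ^+ 2)) - e * L B.
  elim => [|m IH] r Br rB.
    by apply: base => //; rewrite addr0 in rB.
  have [rB2|rB2] := leP r (B^+2); first exact: base.
  have r0 : 0 <= r by lra.
  have q0 : 0 <= Num.sqrt r := sqrtr_ge0 r.
  have qq : (Num.sqrt r) ^+ 2 = r := sqr_sqrtr r0.
  set q := Num.sqrt r in q0 qq.
  have Bq : B <= q.
    rewrite -qq in rB2; rewrite expr2 in rB2 *; nra.
  have qB : q <= B^+2 + m%:R.
    have m0 : 0 <= m%:R :> R by [].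
    rewrite -qq -natr1 in rB; rewrite expr2 in rB *; nra.
  have h := IH q Bq qB.
  have hs := Lstep q Bq. rewrite qq in hs.
  have lq : 0 < ln q by apply: ln_gt0; lra.
  have lr : ln (ln r) = ln 2 + ln (ln q).
    have q0' : 0 < q by lra.
    rewrite -qq (lnXn 2 q0') -(mulr_natl (ln q) 2) lnM ?posrE //.
  lra.
move=> r Br.
apply: (ind (Num.Def.archi_bound r)) => //.
have := archi_boundP (ltW (lt_le_trans (ltr0Sn R 1) (le_trans B2 Br))).
have : 0 <= B^+2 by rewrite sqr_ge0.
lra.
Qed.

Theorem lemma3p4 (R : realType) (R0 : R) (phi s : R -> R) :
  0 < R0 ->
  (* phi : (R0,oo) -> (0,oo), non-decreasing, unbounded, log r <= phi r <= r *)
  (forall r, R0 < r -> 0 < phi r) ->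
  (forall x y, R0 < x -> x <= y -> phi x <= phi y) ->
  (forall M, exists r, R0 < r /\ M < phi r) ->
  (forall r, R0 < r -> ln r <= phi r /\ phi r <= r) ->
  (* s : (R0,oo) -> (0,oo), non-decreasing, r < s r <= r^2, liminf s(r)/r > 1 *)
  (forall r, R0 < r -> 0 < s r) ->
  (forall x y, R0 < x -> x <= y -> s x <= s y) ->
  (forall r, R0 < r -> r < s r /\ s r <= r ^+ 2) ->
  (1%:E < limf_einf (fun r : R => (s r / r)%:E) +oo%R)%E ->
  (* hypotheses of the lemma *)
  (0%:E < beta_phi phi)%E ->
  (exists zeta : R,
     (fun r : R => ln (phi r) / ln (phi (r ^+ 2))) @ +oo%R --> zeta) ->
  alpha_phi_s phi s = 1%:E.
Proof.

Proof.
move=> R0p phipos phimono phiunb _ _ _ sbd _ beta0 [zeta Hz].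
have Lmono : forall x y, R0 < x -> x <= y -> ln (phi x) <= ln (phi y).
  move=> x y Rx xy; rewrite ler_ln ?posrE; first exact: phimono.
    exact: phipos.
  by apply: phipos; exact: lt_le_trans Rx xy.
have Lunb : forall M, exists r, R0 < r /\ forall x, r <= x -> M < ln (phi x).
  move=> M; have [r [Rr Mr]] := phiunb (expR M); exists r; split => // x rx.
  have h : M < ln (phi r) by rewrite -ltr_expR lnK ?posrE ?phipos.
  exact: lt_le_trans h (Lmono _ _ Rr rx).
have [B1 [RB1 LB1]] := Lunb 0.
pose C := Num.max B1 2.
have CB1 : B1 <= C by rewrite le_max lexx.
have C2 : 2 <= C by rewrite le_max lexx orbT.
have CR0 : forall x, C <= x -> R0 < x.
  move=> x Cx; lra.
have Lpos : forall x, C <= x -> 0 < ln (phi x).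
  move=> x Cx; apply: LB1; lra.
have Lsq : forall x, C <= x -> ln (phi x) <= ln (phi (x ^+ 2)).
  move=> x Cx; apply: Lmono; first exact: CR0.
  rewrite expr2; have := C2; nra.
have gle1 : forall x, C <= x -> ln (phi x) / ln (phi (x ^+ 2)) <= 1.
  move=> x Cx; rewrite ler_pdivrMr ?mul1r; first exact: Lsq.
  apply: Lpos; rewrite expr2; have := C2; nra.
have nearP : forall (P : R -> Prop), (\forall x \near +oo, P x) ->
    exists M, forall x, M < x -> P x.
  by move=> P [M [_ HM]]; exists M.
have cvgz : forall eps : R, 0 < eps -> exists M, forall x, M < x ->
    `|zeta - ln (phi x) / ln (phi (x ^+ 2))| < eps.
  by move=> eps eps0; apply: nearP; exact: (cvgrPdist_lt _ _).1 Hz eps eps0.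
have zle1 : zeta <= 1.
  rewrite leNgt; apply/negP => z1.
  have z10 : 0 < zeta - 1 by rewrite subr_gt0.
  have [M HM] := cvgz (zeta - 1) z10.
  pose x := Num.max (M + 1) C.
  have Mx : M < x by rewrite lt_max; apply/orP; left; lra.
  have Cx : C <= x by rewrite le_max lexx orbT.
  move: (HM x Mx) (gle1 x Cx); set g := ln (phi x) / ln (phi (x ^+ 2)).
  rewrite ltr_norml => /andP[h1 h2] h3; lra.
have [zl1|zeq1] : zeta < 1 \/ zeta = 1.
  by move: zle1; rewrite le_eqVlt => /orP[/eqP|]; auto.
- exfalso.
  pose rho := (1 + zeta) / 2.
  have z10 : 0 < (1 - zeta) / 2 by lra.
  have [M1 HM1] := cvgz ((1 - zeta) / 2) z10.
  pose A := Num.max (M1 + 1) C.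
  have AC : C <= A by rewrite le_max lexx orbT.
  have AM : M1 < A by rewrite lt_max; apply/orP; left; lra.
  have stepr : forall q, A <= q -> ln (phi q) <= rho * ln (phi (q ^+ 2)).
    move=> q Aq.
    have Cq : C <= q by exact: le_trans AC Aq.
    have q2 : C <= q ^+ 2 by rewrite expr2; have := C2; nra.
    have Lp := Lpos _ q2.
    have := HM1 q (lt_le_trans AM Aq).
    rewrite ltr_norml => /andP[h1 _].
    have : ln (phi q) / ln (phi (q ^+ 2)) <= rho.
      move: h1; set g := ln (phi q) / ln (phi (q ^+ 2)); rewrite /rho; lra.
    by rewrite ler_pdivrMr.
  have : (beta_phi phi <= 0%:E)%E.
    apply/lee_addgt0Pr => eps eps0; rewrite add0e.
    pose e := eps / 2.
    have e0 : 0 < e by rewrite divr_gt0.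
    have rho1 : 0 < 1 - rho by rewrite /rho; lra.
    have [T [RT HT]] := Lunb (ln 2 / (e * (1 - rho))).
    pose B := Num.max A (Num.max T 2).
    have AB : A <= B by rewrite le_max lexx.
    have TB : T <= B by rewrite !le_max lexx orbT.
    have B2 : 2 <= B by rewrite !le_max lexx !orbT.
    have CB : C <= B := le_trans AC AB.
    have hmono : forall x y, B <= x -> x <= y ->
        (fun x => ln (phi x)) x <= (fun x => ln (phi x)) y.
      move=> x y Bx xy /=; apply: Lmono => //; apply: CR0; exact: le_trans CB Bx.
    have hstep : forall q, B <= q -> ln 2 + e * (fun x => ln (phi x)) q
         <= e * (fun x => ln (phi x)) (q ^+ 2).
      move=> q Bq /=.
      have Aq := le_trans AB Bq. have Cq := le_trans CB Bq.
      have h1 := stepr q Aq. have h2 := Lsq q Cq.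
      have h3 : ln 2 / (e * (1 - rho)) < ln (phi q) := HT q (le_trans TB Bq).
      rewrite ltr_pdivrMr ?mulr_gt0 // in h3.
      have p1 : e * ((1 - rho) * ln (phi (q ^+ 2))) <= e * (ln (phi (q ^+ 2)) - ln (phi q)).
        by rewrite ler_pM2l //; lra.
      have p2 : e * ((1 - rho) * ln (phi q)) <= e * ((1 - rho) * ln (phi (q ^+ 2))).
        by rewrite ler_pM2l // ler_pM2l.
      nra.
    have hkey := @key R (fun x => ln (phi x)) B e B2 e0 hmono hstep.
    simpl in hkey.
    set K := ln (ln (B ^+ 2)) - e * ln (phi B) in hkey.
    have [T2 [RT2 HT2]] := Lunb (`|K| / e).
    pose D := Num.max B T2.
    rewrite /beta_phi limf_esupE.
    apply: (@le_trans _ _ (ereal_sup ((fun r => (ln (ln r) / ln (phi r))%:E) @` [set x | D < x]))).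
      apply: ereal_inf_lbound; exists [set x | D < x] => //.
      by exists D; split => //; exact: num_real.
    apply: ge_ereal_sup => _ [x Dx <-]; rewrite lee_fin.
    move: Dx; rewrite /= gt_max => /andP[Bx T2x].
    have Lx := Lpos x (le_trans CB (ltW Bx)).
    rewrite ler_pdivrMr //.
    have hk := hkey x (ltW Bx).
    have hK : `|K| / e < ln (phi x) := HT2 x (ltW T2x).
    rewrite ltr_pdivrMr // in hK.
    have := ler_norm K.
    rewrite /e in hk hK.
    nra.
  move=> h; have := lt_le_trans beta0 h; by rewrite ltxx.
- subst zeta.
  apply/eqP; rewrite eq_le; apply/andP; split.
  + rewrite /alpha_phi_s limf_einfE; apply: ge_ereal_sup => _ [V [M [_ HM]] <-].
    pose x := Num.max (M + 1) C.
    have Mx : M < x by rewrite lt_max; apply/orP; left; lra.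
    have Cx : C <= x by rewrite le_max lexx orbT.
    apply: (@le_trans _ _ ((ln (phi x) / ln (phi (s x)))%:E)).
      by apply: ereal_inf_lbound; exists x => //; exact: HM.
    have [sx1 sx2] := sbd x (CR0 x Cx).
    rewrite lee_fin ler_pdivrMr ?mul1r; first exact: Lmono (CR0 x Cx) (ltW sx1).
    by apply: Lpos; lra.
  + apply/lee_addgt0Pr => d d0.
    have [M HM] := cvgz d d0.
    pose V := [set x | Num.max M C < x].
    apply: (@le_trans _ _ ((1 - d)%:E + d%:E)%E).
      by rewrite -EFinD subrK.
    apply: leeD2r.
    rewrite /alpha_phi_s limf_einfE.
    apply: (@le_trans _ _ (ereal_inf ((fun r => (ln (phi r) / ln (phi (s r)))%:E) @` V))).
      apply: le_ereal_inf_tmp => _ [x Vx <-]; rewrite lee_fin.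
      move: Vx; rewrite /V /= gt_max => /andP[Mx Cx'].
      have Cx := ltW Cx'.
      have [sx1 sx2] := sbd x (CR0 x Cx).
      have Cs : C <= s x by lra.
      have x2 : C <= x ^+ 2 by rewrite expr2; have := C2; nra.
      move: (HM x Mx); rewrite ltr_norml => /andP[_ g1].
      have g : 1 - d < ln (phi x) / ln (phi (x ^+ 2)).
        by move: g1; set g := ln (phi x) / ln (phi (x ^+ 2)); lra.
      apply: ltW (lt_le_trans g _).
      rewrite ler_pM2l; last exact: Lpos.
      rewrite lef_pV2 ?posrE; [|exact: Lpos|exact: Lpos].
      exact: Lmono (CR0 _ Cs) sx2.
    apply: ereal_sup_ubound; exists V => //.
    by exists (Num.max M C); split => //; exact: num_real.
Qed.
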